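(* Let $p,q$ be positive integers with $2\le p/q<4$, let $G$ be a connected graph with a fixed orientation, and let $f,g$ be two $(p,q)$-colourings of $G$. Let $T$ be a spanning tree of $G$ rooted at a vertex $u$, and for each vertex $v$ and $h\in\{f,g\}$ let $\mathrm{wt}(v,\varphi_h)=\varphi_h(P_v)$, where $P_v$ is the $(u,v)$-path in $T$ traversed from $u$ to $v$. Let $X=\{v:\mathrm{wt}(v,\varphi_f)\le\mathrm{wt}(v,\varphi_g)\}$ and $\overline{X}=V(G)\setminus X$. If both $D_f[X]$ and $D_f[\overline{X}]$ contain a directed cycle, then $f$ does not reconfigure to $g$.
   Context: A $(p,q)$-colouring of $G$ is a map $f:V(G)\to\{0,\dots,p-1\}$ with $q\le|f(u)-f(v)|\le p-q$ for every edge $uv$. $f$ reconfigures to $g$ if there is a sequence of $(p,q)$-colourings from $f$ to $g$ with consecutive ones differing on at most one vertex. For an arc $e=\overrightarrow{xy}$, $\varphi_h(e)=h(y)-h(x)\bmod p$. For a path $P$ with a chosen direction of traversal, $\varphi_h(P)$ is the sum (in $\mathbb{Z}$) of $\varphi_h(e)$ over edges $e$ of $P$ oriented along the traversal and of $p-\varphi_h(e)$ over edges oriented against it. $D_f$ is the digraph on $V(G)$ with an arc $\overrightarrow{xy}$ whenever $xy\in E(G)$ and $f(y)-f(x)\equiv q\pmod p$. *)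

(* Defs.v *)
From mathcomp Require Import all_boot.
From Stdlib Require Import Relations.Relation_Operators.
Set Implicit Arguments. Unset Strict Implicit. Unset Printing Implicit Defensive.

Section Defs.
Variable V : finType.

Definition absdiff (m n : nat) : nat := (m - n) + (n - m).

Definition pq_colouring (p q : nat) (e : rel V) (f : V -> nat) : Prop :=
  (forall v, f v < p) /\
  (forall x y, e x y -> q <= absdiff (f x) (f y) <= p - q).

Definition recolour_step (p q : nat) (e : rel V) (f g : V -> nat) : Prop :=
  pq_colouring p q e f /\ pq_colouring p q e g /\
  exists w : V, forall v, v != w -> f v = g v.

Definition reconfigures (p q : nat) (e : rel V) (f g : V -> nat) : Prop :=
  clos_refl_trans (V -> nat) (recolour_step p q e) f g.

Definition simple_graph (e : rel V) : Prop := symmetric e /\ irreflexive e.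
Definition connected_graph (e : rel V) : Prop := forall x y, connect e x y.

Definition orientation (e o : rel V) : Prop :=
  (forall x y, o x y -> e x y) /\ (forall x y, e x y -> o x y (+) o y x).

(* phi_h(xy) = h(y) - h(x) mod p, for an arc xy (values of h lie in [0,p)) *)
Definition phi (p : nat) (h : V -> nat) (x y : V) : nat := (h y + p - h x) %% p.

Definition trav (p : nat) (o : rel V) (h : V -> nat) (a b : V) : nat :=
  if o a b then phi p h a b else p - phi p h b a.

(* phi_h of the path x :: s, traversed from x to the last vertex *)
Definition path_phi (p : nat) (o : rel V) (h : V -> nat) (x : V) (s : seq V) : nat :=
  \sum_(ab <- zip (x :: s) s) trav p o h ab.1 ab.2.

(* cycle (length >= 3, distinct vertices) in an undirected graph t *)
Definition has_cycle (t : rel V) : Prop :=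
  exists (x : V) (s : seq V),
    [/\ 2 <= size s, uniq (x :: s), path t x s & t (last x s) x].

Definition spanning_tree (e t : rel V) : Prop :=
  [/\ symmetric t, (forall x y, t x y -> e x y),
      (forall x y, connect t x y) & ~ has_cycle t].

Definition is_tpath (t : rel V) (x y : V) (s : seq V) : Prop :=
  [/\ path t x s, last x s = y & uniq (x :: s)].

Definition Dgraph (p q : nat) (e : rel V) (f : V -> nat) : rel V :=
  fun x y => e x y && ((f y + p - f x) %% p == q %% p).

(* the induced subdigraph D[A] contains a directed cycle
   (distinct vertices, length >= 2) *)
Definition has_dicycle_in (D : rel V) (A : {set V}) : Prop :=
  exists (x : V) (s : seq V),
    [/\ 1 <= size s, uniq (x :: s), all (mem A) (x :: s),
        path D x s & D (last x s) x].
End Defs.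

(* Main.v *)
Require Import Defs.
From mathcomp Require Import all_boot.
From mathcomp Require Import zify.
From Stdlib Require Import Relations.Relation_Operators Relations.Operators_Properties.
Set Implicit Arguments. Unset Strict Implicit.

Section Aux.
Variables (V : finType) (e o : rel V) (p q : nat).
Hypotheses (hq : 0 < q) (h2 : 2 * q <= p) (h4 : p < 4 * q).

Lemma modp_cases a b : a < p -> b < p ->
  (a + p - b) %% p = if b <= a then a - b else a + p - b.
Proof.
move=> ha hb; case: ifP => hba.
- have -> : a + p - b = (a - b) + p by lia.
  rewrite modnDr modn_small //; lia.
- rewrite modn_small //; lia.
Qed.

Lemma travT h a b : pq_colouring p q e h -> e a b ->
  q <= trav p o h a b /\ trav p o h a b <= p - q /\
  (trav p o h a b + h a = h b \/ trav p o h a b + h a = h b + p).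
Proof.
move=> [hlt hadj] eab.
have := hadj _ _ eab; rewrite /absdiff => /andP [l1 l2].
have ha := hlt a; have hb := hlt b.
rewrite /trav /phi; case: (o a b).
- rewrite modp_cases //; case: ifP => hc; lia.
- rewrite modp_cases //; case: ifP => hc; lia.
Qed.

Lemma trav_eq h h' a b : h' a = h a -> h' b = h b ->
  trav p o h' a b = trav p o h a b.
Proof. by move=> ea eb; rewrite /trav /phi ea eb. Qed.

Lemma trav_shift h h' x a a' : pq_colouring p q e h -> pq_colouring p q e h' ->
  e x a -> e x a' -> h' a = h a -> h' a' = h a' ->
  trav p o h' x a + trav p o h x a' = trav p o h x a + trav p o h' x a'.
Proof.
move=> ph ph' ea ea' Ha Ha'.
have [T1 [T2 T3]] := travT ph ea. have [T4 [T5 T6]] := travT ph' ea.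
have [T7 [T8 T9]] := travT ph ea'. have [T10 [T11 T12]] := travT ph' ea'.
rewrite Ha in T6; rewrite Ha' in T12. lia.
Qed.

Lemma trav_mid h h' a w b : pq_colouring p q e h -> pq_colouring p q e h' ->
  e a w -> e w b -> h' a = h a -> h' b = h b ->
  trav p o h' a w + trav p o h' w b = trav p o h a w + trav p o h w b.
Proof.
move=> ph ph' ea eb Ha Hb.
have [T1 [T2 T3]] := travT ph ea. have [T4 [T5 T6]] := travT ph' ea.
have [T7 [T8 T9]] := travT ph eb. have [T10 [T11 T12]] := travT ph' eb.
rewrite Ha in T6; rewrite Hb in T12. lia.
Qed.

Lemma path_phi_cons h x y s :
  path_phi p o h x (y :: s) = trav p o h x y + path_phi p o h y s.
Proof. by rewrite /path_phi /= big_cons. Qed.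

Lemma path_phi_nil h x : path_phi p o h x [::] = 0.
Proof. by rewrite /path_phi /= big_nil. Qed.

Lemma path_phi_ext h h' x s : (forall v, h' v = h v) ->
  path_phi p o h' x s = path_phi p o h x s.
Proof.
move=> E; elim: s x => [|y s IH] x; first by rewrite !path_phi_nil.
by rewrite !path_phi_cons IH (trav_eq (E x) (E y)).
Qed.

Lemma pathB h h' w : irreflexive e -> pq_colouring p q e h -> pq_colouring p q e h' ->
  (forall v, v != w -> h' v = h v) ->
  forall s x, path e x s -> last x s != w ->
  (x != w -> path_phi p o h' x s = path_phi p o h x s) /\
  (x = w -> forall y s', s = y :: s' ->
     path_phi p o h' x s + trav p o h x y = path_phi p o h x s + trav p o h' x y).
Proof.
move=> irr ph ph' E; elim=> [|y s IH] x /=.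
- move=> _ lx; split; first by rewrite !path_phi_nil.
  by move=> exw; rewrite exw eqxx in lx.
- move=> /andP [exy py] ly; have [IH1 IH2] := IH y py ly.
  split.
  + move=> xw; rewrite !path_phi_cons; case: (eqVneq y w) => yw.
    * case: s IH py ly IH1 IH2 => [|z s'] IH py ly IH1 IH2.
        by rewrite /= yw eqxx in ly.
      have eyz : e y z by move: py => /= /andP [].
      have zw : z != w.
        by apply/eqP => zw; move: eyz; rewrite yw zw irr.
      have := IH2 yw z s' erefl.
      rewrite !path_phi_cons.
      have := trav_mid ph ph' exy eyz (E _ xw) (E _ zw). lia.
    * by rewrite (trav_eq (E _ xw) (E _ yw)) IH1.
  + move=> xw y' s' [<- _].
    have yw : y != w by apply/eqP => yw; move: exy; rewrite xw yw irr.
    rewrite !path_phi_cons (IH1 yw). lia.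
Qed.

Lemma frozen f h h' w (c : seq V) : irreflexive e ->
  pq_colouring p q e f -> pq_colouring p q e h' ->
  cycle (Dgraph p q e f) c -> (forall v, v \in c -> h v = f v) ->
  (forall v, v != w -> h' v = h v) ->
  forall v, v \in c -> h' v = f v.
Proof.
move=> irr [flt fadj] [hlt hadj] cyc agree E v vc.
case: (eqVneq v w) => [vw|vw]; last by rewrite E // agree.
subst v.
have Da := prev_cycle cyc vc; have Db := next_cycle cyc vc.
have ac : prev c w \in c by rewrite mem_prev.
have bc : next c w \in c by rewrite mem_next.
move: Da Db; rewrite /Dgraph.
set a := prev c w; set b := next c w.
move=> /andP [eaw Haw] /andP [ewb Hwb].
have aw : a != w by apply/eqP => aw; move: eaw; rewrite aw irr.
have bw : b != w by apply/eqP => bw; move: ewb; rewrite bw irr.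
have Ha : h' a = f a by rewrite E // agree.
have Hb : h' b = f b by rewrite E // agree.
have := hadj _ _ eaw; have := hadj _ _ ewb; rewrite /absdiff Ha Hb.
move=> /andP [l1 l2] /andP [l3 l4].
have qp : q %% p = q by rewrite modn_small //; lia.
move: Haw Hwb; rewrite qp !modp_cases //.
have := flt a; have := flt b; have := flt w; have := hlt w.
case: ifP => c1; case: ifP => c2 => ? ? ? ? /eqP ? /eqP ?; lia.
Qed.

End Aux.

Theorem lemma2p9 (V : finType) (e o : rel V) (p q : nat)
  (f g : V -> nat) (t : rel V) (u : V) (P : V -> seq V) :
  0 < q -> 2 * q <= p -> p < 4 * q ->
  simple_graph e -> connected_graph e -> orientation e o ->
  pq_colouring p q e f -> pq_colouring p q e g ->
  spanning_tree e t ->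
  (forall v, is_tpath t u v (P v)) ->
  let X := [set v | path_phi p o f u (P v) <= path_phi p o g u (P v)] in
  has_dicycle_in (Dgraph p q e f) X ->
  has_dicycle_in (Dgraph p q e f) (~: X) ->
  ~ reconfigures p q e f g.
Proof.
move=> hq h2 h4 [_ irr] _ _ pf pg [_ te _ _] HP X [x1 [s1 [_ _ all1 pth1 cl1]]]
  [x2 [s2 [_ _ all2 pth2 cl2]]] R.
have cyc1 : cycle (Dgraph p q e f) (x1 :: s1) by rewrite /cycle rcons_path pth1 cl1.
have cyc2 : cycle (Dgraph p q e f) (x2 :: s2) by rewrite /cycle rcons_path pth2 cl2.
have x1X : x1 \in X by move: all1 => /= /andP [].
have x2X : x2 \in ~: X by move: all2 => /= /andP [].
rewrite !inE in x1X x2X.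
have Pe : forall v, path e u (P v) by move=> v; have [pt _ _] := HP v; exact: (sub_path (e := t) (e' := e) te pt).
have Pl : forall v, last u (P v) = v by move=> v; have [_ l _] := HP v.
set S := fun h v => path_phi p o h u (P v).
suff : forall k, clos_refl_trans_n1 (V -> nat) (recolour_step p q e) f k ->
  (forall v, v \in x1 :: s1 -> k v = f v) /\ (forall v, v \in x2 :: s2 -> k v = f v) /\
  S k x1 + S f x2 = S f x1 + S k x2.
  move=> /(_ g (clos_rt_rtn1 _ _ _ _ R)) [_ [_]]; rewrite /S; move=> T; clear -T x1X x2X; lia.
move=> k; elim=> [|y z st _ [A1 [A2 Hs]]]; first by split; [|split].
case: st => [py [pz [w E]]].
have E' : forall v, v != w -> z v = y v by move=> v /E ->.
have B1 := frozen hq h2 h4 irr pf pz cyc1 A1 E'.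
have B2 := frozen hq h2 h4 irr pf pz cyc2 A2 E'.
split; first exact: B1. split; first exact: B2.
suff : S z x1 + S y x2 = S y x1 + S z x2 by move=> T; clear -Hs T; lia.
case: (eqVneq (z w) (y w)) => zw.
  have Eall : forall v, z v = y v.
    by move=> v; case: (eqVneq v w) => [->//|/E'].
  by rewrite /S !(path_phi_ext _ _ _ _ Eall).
have w1 : x1 != w.
  by apply/eqP => ew; move: zw; rewrite -ew B1 ?A1 ?mem_head ?eqxx.
have w2 : x2 != w.
  by apply/eqP => ew; move: zw; rewrite -ew B2 ?A2 ?mem_head ?eqxx.
have L1 := pathB o hq h2 h4 irr py pz E' (Pe x1) ltac:(by rewrite Pl).
have L2 := pathB o hq h2 h4 irr py pz E' (Pe x2) ltac:(by rewrite Pl).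
have [L11 L12] := L1. have [L21 L22] := L2.
case: (eqVneq u w) => uw; last by rewrite /S L11 // L21.
move: (Pe x1) (Pe x2) (Pl x1) (Pl x2) L12 L22; rewrite /S.
case: (P x1) => [|y1 r1]; first by move=> _ _ /= ux1; move: w1; rewrite -ux1 uw eqxx.
case: (P x2) => [|y2 r2]; first by move=> _ _ _ /= ux2; move: w2; rewrite -ux2 uw eqxx.
move=> /= /andP [e1 _] /andP [e2 _] _ _ /(_ uw y1 r1 erefl) M1 /(_ uw y2 r2 erefl) M2.
have Ny1 : y1 != w.
  by apply/eqP => yw; move: e1; rewrite uw yw irr.
have Ny2 : y2 != w.
  by apply/eqP => yw; move: e2; rewrite uw yw irr.
have := trav_shift o hq h2 h4 py pz e1 e2 (E' _ Ny1) (E' _ Ny2).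
move=> T; clear -M1 M2 T; lia.
Qed.
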